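(* Let $H_1,\ldots,H_r\in\mathcal S(\mathfrak q)^Q$ be bi-homogeneous polynomials such that, for generic $x\in V^*$, the elements $\varphi_x(H_i)$ with $i\le\operatorname{ind}\mathfrak g_x$ freely generate $\mathcal S(\mathfrak g_x)^{G_x}=\mathcal S(\mathfrak g_x)^{\mathfrak g_x}$, and $H_j\in\mathbb C[V^*]^G$ for $j>\operatorname{ind}\mathfrak g_x$. Suppose also that $\sum_{i=1}^{\operatorname{ind}\mathfrak g_x}\deg_{\mathfrak g}H_i=\mathbf b(\mathfrak g_x)$. Then $\sum_{i=1}^r\deg H_i=\mathbf b(\mathfrak q)$ if and only if $\sum_{i=1}^r\deg_V H_i=\dim V$.
   Context: Setting: $G$ is a connected complex reductive algebraic group with Lie algebra $\mathfrak g$, $V$ a finite-dimensional $G$-module such that no nonzero ideal of $\mathfrak g$ acts trivially on $V$, and $\mathfrak q=\mathfrak g\ltimes V$ is the semi-direct product with $V$ an abelian ideal; $\mathfrak q=\mathrm{Lie}\,Q$, $Q=G\ltimes\exp(V)$. Identify $\mathfrak g\cong\mathfrak g^*$, so $\mathfrak q^*=\mathfrak g\oplus V^*$; $\mathcal S(\mathfrak q)=\mathbb C[\mathfrak q^*]$ is bigraded by $\deg_{\mathfrak g}$ and $\deg_V$, and $\deg=\deg_{\mathfrak g}+\deg_V$ for bi-homogeneous elements. Index: $\operatorname{ind}\mathfrak l=\min_{\gamma\in\mathfrak l^*}\dim\mathfrak l_\gamma$; $\mathbf b(\mathfrak l)=(\dim\mathfrak l+\operatorname{ind}\mathfrak l)/2$.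 For $x\in V^*$, $\mathfrak g_x,G_x$ are stabilisers. Restriction map $\varphi_x:\mathbb C[\mathfrak q^*]^Q\to\mathcal S(\mathfrak g_x)^{G_x}$: restrict to $\mathfrak g+x$, identify with $\mathfrak g$ with $x$ as origin; the result is invariant under translation by $\mathrm{Ann}(\mathfrak g_x)$, hence a polynomial on $\mathfrak g/\mathrm{Ann}(\mathfrak g_x)\cong\mathfrak g_x^*$. ''Generic'' means on a nonempty Zariski-open subset. Raïs' formula: $\operatorname{ind}\mathfrak q=\dim V-(\dim\mathfrak g-\dim\mathfrak g_x)+\operatorname{ind}\mathfrak g_x$ for generic $x\in V^*$. *)

(* Defs.v *)
From HB Require Import structures.
From mathcomp Require Import all_boot all_order all_algebra.
From mathcomp Require Import mpoly.
From mathcomp Require Import complex.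
From mathcomp Require Import reals.
From Stdlib Require Import ClassicalEpsilon.

Set Implicit Arguments.
Unset Strict Implicit.
Unset Printing Implicit Defensive.

Import Order.TTheory GRing.Theory Num.Theory.
Local Open Scope ring_scope.

(* Conventions.  A finite-dimensional Lie algebra of dimension N over a      *)
(* field K is K^N = 'rV[K]_N (row vectors, standard basis [ev i]) with a     *)
(* bracket br : 'rV_N -> 'rV_N -> 'rV_N.  The dual l^* is also 'rV_N, the    *)
(* pairing being [pair gamma y = sum_k gamma_k y_k].  Subspaces are the row  *)
(* spaces of matrices (mxalgebra).  S(l) = C[l^*] is {mpoly K[N]}, the       *)
(* variable 'X_i being the basis vector e_i seen as a linear form on l^*.   *)

Section Defs.
Variable K : fieldType.

Definition ev {N : nat} (i : 'I_N) : 'rV[K]_N := delta_mx 0 i.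

Definition pair {N : nat} (gamma y : 'rV[K]_N) : K := \sum_k gamma 0 k * y 0 k.

Definition formmx {N : nat} (br : 'rV[K]_N -> 'rV[K]_N -> 'rV[K]_N)
  (gamma : 'rV[K]_N) : 'M[K]_N :=
  \matrix_(i, j) pair gamma (br (ev i) (ev j)).

(* For a subalgebra s (row space of U) of l and gamma in l^* (restricted to
   s), the stabiliser s_gamma = { a in s | gamma([a,b]) = 0 for all b in s }. *)
Definition stab_sub {N : nat} (br : 'rV[K]_N -> 'rV[K]_N -> 'rV[K]_N)
  (U : 'M[K]_N) (gamma : 'rV[K]_N) : 'M[K]_N :=
  (U :&: kermx (formmx br gamma *m U^T))%MS.

Definition pdec (P : Prop) : bool :=
  if excluded_middle_informative P then true else false.

Lemma ind_sub_ex {N : nat} (br : 'rV[K]_N -> 'rV[K]_N -> 'rV[K]_N)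
  (U : 'M[K]_N) :
  exists k, pdec (exists gamma : 'rV[K]_N, \rank (stab_sub br U gamma) = k).
Proof.
exists (\rank (stab_sub br U 0)); rewrite /pdec.
case: excluded_middle_informative => // H.
by exfalso; apply: H; exists 0.
Qed.

(* ind s = min_{gamma in s^*} dim s_gamma  (every element of s^* is the
   restriction of an element of l^* ) *)
Definition ind_sub {N : nat} (br : 'rV[K]_N -> 'rV[K]_N -> 'rV[K]_N)
  (U : 'M[K]_N) : nat := ex_minn (ind_sub_ex br U).

Definition ind {N : nat} (br : 'rV[K]_N -> 'rV[K]_N -> 'rV[K]_N) : nat :=
  ind_sub br 1%:M.

Definition bb_sub {N : nat} (br : 'rV[K]_N -> 'rV[K]_N -> 'rV[K]_N)
  (U : 'M[K]_N) : nat := ((\rank U + ind_sub br U) %/ 2)%N.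

Definition bb {N : nat} (br : 'rV[K]_N -> 'rV[K]_N -> 'rV[K]_N) : nat :=
  bb_sub br 1%:M.

(* bracket of g from structure constants c i j = [e_i, e_j] (bilinear) *)
Definition gbr {n : nat} (c : 'I_n -> 'I_n -> 'rV[K]_n) (a b : 'rV[K]_n)
  : 'rV[K]_n := \sum_i \sum_j (a 0 i * b 0 j) *: c i j.

Definition is_lie {N : nat} (br : 'rV[K]_N -> 'rV[K]_N -> 'rV[K]_N) : Prop :=
  (forall a b, br a b = - br b a) /\
  (forall a b d, br a (br b d) + br b (br d a) + br d (br a b) = 0).

(* the representation: A i is the matrix of e_i acting on V = K^m; a acts
   by the matrix actm A a, i.e. (a . w)_k = sum_l (actm A a)_{k l} w_l *)
Definition actm {n m : nat} (A : 'I_n -> 'M[K]_m) (a : 'rV[K]_n) : 'M[K]_m :=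
  \sum_i a 0 i *: A i.

Definition act {n m : nat} (A : 'I_n -> 'M[K]_m) (a : 'rV[K]_n) (w : 'rV[K]_m)
  : 'rV[K]_m := w *m (actm A a)^T.

Definition is_rep {n m : nat} (c : 'I_n -> 'I_n -> 'rV[K]_n)
  (A : 'I_n -> 'M[K]_m) : Prop :=
  forall a b, actm A (gbr c a b) = actm A a *m actm A b - actm A b *m actm A a.

Definition admx {n : nat} (c : 'I_n -> 'I_n -> 'rV[K]_n) (i : 'I_n) : 'M[K]_n :=
  \matrix_(j, k) gbr c (ev i) (ev j) 0 k.

Definition ad_stable {n : nat} (c : 'I_n -> 'I_n -> 'rV[K]_n) (U : 'M[K]_n)
  : bool := [forall i, (U *m admx c i <= U)%MS].

(* g reductive: the adjoint representation is semisimple, i.e. every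
   ad-stable subspace has an ad-stable complement *)
Definition reductive {n : nat} (c : 'I_n -> 'I_n -> 'rV[K]_n) : Prop :=
  forall U : 'M[K]_n, ad_stable c U ->
    exists W : 'M[K]_n, [/\ ad_stable c W, (U :&: W == (0 : 'M[K]_n))%MS & (U + W == 1%:M)%MS].

Definition no_trivial_ideal {n m : nat} (c : 'I_n -> 'I_n -> 'rV[K]_n)
  (A : 'I_n -> 'M[K]_m) : Prop :=
  forall I : 'M[K]_n, ad_stable c I ->
    (forall a : 'rV[K]_n, (a <= I)%MS -> actm A a = 0) -> (I == (0 : 'M[K]_n))%MS.

(* the semi-direct product q = g |x V on K^(n+m) (first n coordinates: g) *)
Definition qbr {n m : nat} (c : 'I_n -> 'I_n -> 'rV[K]_n) (A : 'I_n -> 'M[K]_m)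
  (y z : 'rV[K]_(n + m)) : 'rV[K]_(n + m) :=
  row_mx (gbr c (lsubmx y) (lsubmx z))
         (act A (lsubmx y) (rsubmx z) - act A (lsubmx z) (rsubmx y)).

(* stabiliser g_x of x in V^* : { a | x(a . w) = 0 for all w }; the i-th
   row of the matrix below is x o A i, so g_x is its (row) kernel *)
Definition gx {n m : nat} (A : 'I_n -> 'M[K]_m) (x : 'rV[K]_m) : 'M[K]_n :=
  kermx (\matrix_(i, l) (x *m A i) 0 l).

Definition lin {N : nat} (v : 'rV[K]_N) : {mpoly K[N]} := \sum_i v 0 i *: 'X_i.

(* the derivation of S(l) extending ad(y) *)
Definition adpoly {N : nat} (br : 'rV[K]_N -> 'rV[K]_N -> 'rV[K]_N)
  (y : 'rV[K]_N) (H : {mpoly K[N]}) : {mpoly K[N]} :=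
  \sum_k lin (br y (ev k)) * mderiv k H.

Definition lie_invariant {N : nat} (br : 'rV[K]_N -> 'rV[K]_N -> 'rV[K]_N)
  (H : {mpoly K[N]}) : Prop := forall i : 'I_N, adpoly br (ev i) H = 0.

Definition gpart {n m : nat} (mono : 'X_{1..n + m}) : nat :=
  (\sum_(i < n + m | (i < n)%N) mono i)%N.
Definition vpart {n m : nat} (mono : 'X_{1..n + m}) : nat :=
  (\sum_(i < n + m | (n <= i)%N) mono i)%N.

Definition bihomog {n m : nat} (H : {mpoly K[n + m]}) : Prop :=
  forall mo1 mo2, mo1 \in msupp H -> mo2 \in msupp H ->
    gpart mo1 = gpart mo2 /\ vpart mo1 = vpart mo2.

Definition degg {n m : nat} (H : {mpoly K[n + m]}) : nat :=
  (\max_(mo <- msupp H) gpart mo)%N.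
Definition degV {n m : nat} (H : {mpoly K[n + m]}) : nat :=
  (\max_(mo <- msupp H) vpart mo)%N.
Definition totdeg {N : nat} (H : {mpoly K[N]}) : nat := (msize H).-1.

Definition in_CVstar_inv {n m : nat} (c : 'I_n -> 'I_n -> 'rV[K]_n)
  (A : 'I_n -> 'M[K]_m) (H : {mpoly K[n + m]}) : Prop :=
  (forall mo, mo \in msupp H -> gpart mo = 0%N) /\
  (forall i : 'I_n, adpoly (qbr c A) (ev (lshift m i)) H = 0).

(* phi_x : restriction of H to g + x (x in V^* ), as a polynomial on g^* *)
Definition phi {n m : nat} (x : 'rV[K]_m) (H : {mpoly K[n + m]}) : {mpoly K[n]} :=
  H \mPo [tuple match split i with
                | inl a => 'X_a
                | inr b => (x 0 b)%:MP
                end | i < n + m].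

(* S(g_x) = polynomials on g^* lie_invariant under translation by Ann(g_x);
   S(g_x)^{g_x} = those moreover annihilated by ad(a), a in g_x. *)
Definition in_Sgx_inv {n m : nat} (c : 'I_n -> 'I_n -> 'rV[K]_n)
  (A : 'I_n -> 'M[K]_m) (x : 'rV[K]_m) (F : {mpoly K[n]}) : Prop :=
  (forall xi eta : 'rV[K]_n, eta *m (gx A x)^T = 0 ->
      meval (fun i => (xi + eta) 0 i) F = meval (fun i => xi 0 i) F) /\
  (forall a : 'rV[K]_n, (a <= gx A x)%MS -> adpoly (gbr c) a F = 0).

Definition freely_generate {n m : nat} (c : 'I_n -> 'I_n -> 'rV[K]_n)
  (A : 'I_n -> 'M[K]_m) (x : 'rV[K]_m) (l : nat) (Fs : l.-tuple {mpoly K[n]})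
  : Prop :=
  [/\ forall i : 'I_l, in_Sgx_inv c A x (tnth Fs i),
      forall P : {mpoly K[l]}, P \mPo Fs = 0 -> P = 0 &
      forall F, in_Sgx_inv c A x F -> exists P : {mpoly K[l]}, F = P \mPo Fs].

(* a property of x in V^* = K^m holds generically: on a nonempty Zariski
   open subset (equivalently, on some basic open set {p <> 0}, p <> 0) *)
Definition generic {m : nat} (P : 'rV[K]_m -> Prop) : Prop :=
  exists p : {mpoly K[m]}, p != 0 /\
    forall x : 'rV[K]_m, meval (fun i => x 0 i) p != 0 -> P x.

End Defs.

(* Main.v *)
Require Import Defs.
From HB Require Import structures.
From mathcomp Require Import all_boot all_order all_algebra.
From mathcomp Require Import mpoly.
From mathcomp Require Import complex.
From mathcomp Require Import reals.
From Stdlib Require Import ClassicalEpsilon.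
Set Implicit Arguments.
Unset Strict Implicit.
Unset Printing Implicit Defensive.
Import Order.TTheory GRing.Theory Num.Theory.
Local Open Scope ring_scope.
Section LinAlg.
Variable K : fieldType.

Lemma perp_sub (r p q : nat) (B : 'M[K]_(p, q)) (u : 'M[K]_(r, p)) :
  u *m (kermx B)^T = 0 -> (u <= B^T)%MS.
Proof.
move=> Hu.
have HW : (u <= kermx (kermx B)^T)%MS by apply/sub_kermxP.
have HB : (B^T <= kermx (kermx B)^T)%MS.
  by apply/sub_kermxP; rewrite -trmx_mul mulmx_ker trmx0.
have Hr : \rank (kermx (kermx B)^T) = \rank B^T.
  rewrite mxrank_ker mxrank_tr mxrank_ker mxrank_tr subKn //.
  exact: rank_leq_row.
have := mxrank_leqif_sup HB; rewrite Hr => /leqif_refl H.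
exact: submx_trans HW H.
Qed.

Lemma mulP_l (p a b : nat) (Y : 'M[K]_(p, a + b)) :
  Y *m col_mx 1%:M 0 = lsubmx Y.
Proof. by rewrite -{1}(hsubmxK Y) mul_row_col mulmx1 mulmx0 addr0. Qed.
Lemma mulP_r (p a b : nat) (Y : 'M[K]_(p, a + b)) :
  Y *m col_mx 0 1%:M = rsubmx Y.
Proof. by rewrite -{1}(hsubmxK Y) mul_row_col mulmx1 mulmx0 add0r. Qed.

Variables (n m : nat) (G : 'M[K]_n) (Bx : 'M[K]_(n, m)).
Let F := block_mx G Bx (- Bx^T) 0.

Lemma kerF_rank :
  (\rank (kermx F) + \rank Bx =
   \rank (kermx Bx :&: kermx (G *m (kermx Bx)^T)) + m)%N.
Proof.
set S := (kermx Bx :&: _)%MS.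
set KF := kermx F.
have HF (p : nat) (Y : 'M[K]_(p, n + m)) : Y *m F =
    row_mx (lsubmx Y *m G - rsubmx Y *m Bx^T) (lsubmx Y *m Bx).
  by rewrite -{1}(hsubmxK Y) mul_row_block mulmx0 addr0 mulmxN.
have HkF (p : nat) (Y : 'M[K]_(p, n + m)) : (Y <= KF)%MS =
    (lsubmx Y *m G == rsubmx Y *m Bx^T) && (lsubmx Y *m Bx == 0).
  by rewrite sub_kermx HF row_mx_eq0 subr_eq0.
have Ha : (KF *m col_mx 1%:M 0 == S)%MS.
  apply/andP; split.
    have := submx_refl KF; rewrite HkF => /andP[/eqP H1 /eqP H2].
    rewrite mulP_l sub_capmx !sub_kermx H2 eqxx /= mulmxA H1 -mulmxA.
    by rewrite -trmx_mul mulmx_ker trmx0 mulmx0.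
  have := submx_refl S; rewrite sub_capmx !sub_kermx => /andP[/eqP H1 /eqP H2].
  have /submxP[w Hw] : (S *m G <= Bx^T)%MS by apply: perp_sub; rewrite -mulmxA.
  have HY : (row_mx S w <= KF)%MS by rewrite HkF row_mxKl row_mxKr Hw H1 !eqxx.
  by have := submxMr (col_mx 1%:M 0) HY; rewrite mulP_l row_mxKl.
set P := col_mx (1%:M : 'M[K]_n) (0 : 'M[K]_(m, n)).
set P' := col_mx (0 : 'M[K]_(n, m)) (1%:M : 'M[K]_m).
set X := (KF :&: kermx P)%MS.
have Hb : (X *m P' == kermx Bx^T)%MS.
  apply/andP; split.
    have := submx_refl X; rewrite sub_capmx HkF sub_kermx mulP_l.
    case/andP => /andP[/eqP H1 _] /eqP H2.
    by rewrite mulP_r sub_kermx -H1 H2 mul0mx.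
  set Z := kermx Bx^T.
  have HZ : Z *m Bx^T = 0 by rewrite mulmx_ker.
  have HY : (row_mx 0 Z <= X)%MS.
    by rewrite sub_capmx HkF sub_kermx mulP_l !row_mxKl row_mxKr HZ !mul0mx !eqxx.
  by have := submxMr P' HY; rewrite mulP_r row_mxKr.
have Hc : (X :&: kermx P')%MS = 0.
  have := submx_refl (X :&: kermx P')%MS.
  rewrite !sub_capmx !sub_kermx mulP_l mulP_r => /andP[/andP[_ /eqP H1] /eqP H2].
  by rewrite -[LHS]hsubmxK H1 H2 row_mx0.
have E1 := mxrank_mul_ker KF P; have E2 := mxrank_mul_ker X P'.
rewrite (eqmx_rank Ha) in E1; rewrite (eqmx_rank Hb) Hc mxrank0 addn0 in E2.
rewrite -E1 -E2 mxrank_ker mxrank_tr -addnA subnK //; exact: rank_leq_col.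
Qed.
End LinAlg.
Section Form.
Variable K : fieldType.
Variables (n m : nat) (c : 'I_n -> 'I_n -> 'rV[K]_n) (A : 'I_n -> 'M[K]_m).
Local Notation ev := (@ev K _).

Definition Bm (x : 'rV[K]_m) : 'M[K]_(n, m) := \matrix_(i, l) (x *m A i) 0 l.

Lemma gbr0l b : gbr c 0 b = 0.
Proof. by rewrite /gbr big1 // => i _; rewrite big1 // => j _; rewrite mxE mul0r scale0r. Qed.
Lemma gbr0r b : gbr c b 0 = 0.
Proof. by rewrite /gbr big1 // => i _; rewrite big1 // => j _; rewrite mxE mulr0 scale0r. Qed.
Lemma actm0 : actm A 0 = 0.
Proof. by rewrite /actm big1 // => i _; rewrite mxE scale0r. Qed.
Lemma act0l w : act A 0 w = 0.
Proof. by rewrite /act actm0 trmx0 mulmx0. Qed.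
Lemma act0r a : act A a 0 = 0.
Proof. by rewrite /act mul0mx. Qed.
Lemma actm_ev i : actm A (ev i) = A i.
Proof.
rewrite /actm (bigD1 i) //= big1 ?addr0; first by rewrite /Defs.ev mxE !eqxx scale1r.
move=> j Hj; rewrite /Defs.ev mxE; case: eqP Hj => [->|_ _]; rewrite ?eqxx /= ?scale0r //.
Qed.
Lemma pair_row (p q : nat) (a1 a2 : 'rV[K]_p) (b1 b2 : 'rV[K]_q) :
  pair (row_mx a1 b1) (row_mx a2 b2) = pair a1 a2 + pair b1 b2.
Proof.
rewrite /pair big_split_ord /=; congr (_ + _); apply: eq_bigr => k _.
  by rewrite (row_mxEl a1) (row_mxEl a2).
by rewrite (row_mxEr a1) (row_mxEr a2).
Qed.
Lemma pair0r (p : nat) (a : 'rV[K]_p) : pair a 0 = 0.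
Proof. by rewrite /pair big1 // => i _; rewrite mxE mulr0. Qed.
Lemma pairNr (p : nat) (a b : 'rV[K]_p) : pair a (- b) = - pair a b.
Proof. by rewrite /pair -sumrN; apply: eq_bigr => k _; rewrite mxE mulrN. Qed.
Lemma pair_ev (p q : nat) (x : 'rV[K]_p) (M : 'M[K]_(p, q)) b :
  pair x (ev b *m M^T) = (x *m M) 0 b.
Proof. by rewrite /pair /Defs.ev -rowE mxE; apply: eq_bigr => k _; rewrite !mxE. Qed.
Lemma qbr_row a1 w1 a2 w2 : qbr c A (row_mx a1 w1) (row_mx a2 w2) =
  row_mx (gbr c a1 a2) (act A a1 w2 - act A a2 w1).
Proof. by rewrite /qbr !row_mxKl !row_mxKr. Qed.
Lemma ev_l a : ev (lshift m a) = row_mx (ev a) 0 :> 'rV[K]_(n + m).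
Proof. by rewrite /Defs.ev delta_mx_lshift. Qed.
Lemma ev_r a : ev (rshift n a) = row_mx 0 (ev a) :> 'rV[K]_(n + m).
Proof. by rewrite /Defs.ev delta_mx_rshift. Qed.

Lemma formmx_q (xi : 'rV[K]_n) (x : 'rV[K]_m) :
  formmx (qbr c A) (row_mx xi x) =
  block_mx (formmx (gbr c) xi) (Bm x) (- (Bm x)^T) 0.
Proof.
apply/matrixP => i j; rewrite mxE.
case: (split_ordP i) => i' Hi; case: (split_ordP j) => j' Hj; subst i j.
all: rewrite ?block_mxEul ?block_mxEur ?block_mxEdl ?block_mxEdr
          ?ev_l ?ev_r qbr_row pair_row
          ?gbr0l ?gbr0r ?act0l ?act0r ?subrr ?sub0r ?subr0 ?pair0r ?addr0 ?add0r.
all: try (by rewrite mxE).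
- by rewrite /act actm_ev pair_ev !mxE.
- by rewrite /act actm_ev pairNr pair_ev !mxE.
Qed.
End Form.
Section Comb.
Variable K : fieldType.
Variables (n m : nat) (c : 'I_n -> 'I_n -> 'rV[K]_n) (A : 'I_n -> 'M[K]_m).

Lemma stab1_rank (N : nat) (br : 'rV[K]_N -> 'rV[K]_N -> 'rV[K]_N) g :
  \rank (stab_sub br 1%:M g) = (N - \rank (formmx br g))%N.
Proof.
rewrite /stab_sub trmx1 mulmx1 -mxrank_ker.
apply/eqmx_rank/andP; split; first by rewrite capmxSr.
by rewrite sub_capmx submx1 submx_refl.
Qed.

Lemma rank_stab_q (xi : 'rV[K]_n) (x : 'rV[K]_m) :
  (\rank (stab_sub (qbr c A) 1%:M (row_mx xi x)) + \rank (Bm A x) =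
   \rank (stab_sub (gbr c) (gx A x) xi) + m)%N.
Proof.
rewrite stab1_rank -mxrank_ker formmx_q; exact: kerF_rank.
Qed.
End Comb.
Section NonVanish.
Variable K : numFieldType.

Lemma poly_nonroot (q : {poly K}) : q != 0 -> exists t, q.[t] != 0.
Proof.
move=> q0.
pose rs := [seq i%:R | i <- iota 0 (size q)] : seq K.
have Hu : uniq rs.
  by rewrite map_inj_uniq ?iota_uniq // => a b /eqP; rewrite eqr_nat => /eqP.
case Hall: (all (root q) rs).
  by have := max_poly_roots q0 Hall Hu; rewrite size_map size_iota ltnn.
by move/negbT: Hall; rewrite -has_predC => /hasP [t _ Ht]; exists t.
Qed.

Definition vext k (v' : 'I_k -> K) (t : K) (i : 'I_k.+1) : K :=
  if unlift ord_max i is Some j then v' j else t.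

Lemma vext_widen k v' t (i : 'I_k) : vext v' t (widen_ord (leqnSn k) i) = v' i.
Proof.
have -> : widen_ord (leqnSn k) i = lift ord_max i by apply: val_inj; rewrite /= /bump leqNgt ltn_ord.
by rewrite /vext liftK.
Qed.
Lemma vext_max k v' t : @vext k v' t ord_max = t.
Proof. by rewrite /vext unlift_none. Qed.

Lemma meval_muni k (p : {mpoly K[k.+1]}) v' t :
  meval (vext v' t) p = (map_poly (meval v') (muni p)).[t].
Proof.
rewrite muniE rmorph_sum horner_sum mevalE; apply: eq_bigr => mo _.
have E (q : {mpoly K[k]}) : map_poly (meval v') q%:P = (meval v' q)%:P.
  by rewrite map_polyC.
rewrite -mul_polyC rmorphM /= E map_polyXn !hornerE.
rewrite mevalZ mevalX big_ord_recr /= vext_max mulrA; congr (_ * _ * _).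
by apply: eq_bigr => i _; rewrite vext_widen mnmE.
Qed.

Lemma muni_coef k (p : {mpoly K[k.+1]}) (mo : 'X_{1..k.+1}) :
  ((muni p)`_(mo ord_max))@_[multinom mo (widen_ord (leqnSn k) i) | i < k] = p@_mo.
Proof.
have Hneq (mx : 'X_{1..k.+1}) : mx ord_max = mo ord_max -> mx != mo ->
  ([multinom mx (widen_ord (leqnSn k) i) | i < k] ==
   [multinom mo (widen_ord (leqnSn k) i) | i < k]) = false.
  move=> H1 H2; apply/negbTE; apply: contra H2 => /eqP H3.
  apply/eqP/mnmP => i; case: (unliftP ord_max i) => [j ->|->] //.
  have := congr1 (fun z : 'X_{1..k} => z j) H3; rewrite /= !mnmE.
  have -> : lift ord_max j = widen_ord (leqnSn k) j.
    by apply: val_inj; rewrite /= /bump leqNgt ltn_ord.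
  by [].
rewrite muniE coef_sumMXn raddf_sum big_mkcond /=.
case: (boolP (mo \in msupp p)) => Hmo.
  rewrite (bigD1_seq mo) ?msupp_uniq //= eqxx mcoeffZ mcoeffX eqxx mulr1.
  rewrite big1 ?addr0 // => mx Hmx; case: eqP => // Hm.
  by rewrite mcoeffZ mcoeffX Hneq ?mulr0.
rewrite (memN_msupp_eq0 Hmo) big1_seq // => mx /andP[_ Hmx]; case: eqP => // Hm.
rewrite mcoeffZ mcoeffX Hneq ?mulr0 //.
by apply: contraNneq Hmo => <-.
Qed.

Lemma mpoly_nonvanish k (p : {mpoly K[k]}) : p != 0 -> exists v, meval v p != 0.
Proof.
elim: k p => [|k IH] p p0.
  exists (fun _ => 0); rewrite [p]nvar0_mpolyC mevalC.
  by apply: contraNneq p0 => H; rewrite [p]nvar0_mpolyC H.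
have [mo Hmo] : exists mo, p@_mo != 0.
  case H: (msupp p) => [|mo s]; last by exists mo; rewrite -mcoeff_msupp H mem_head.
  by case/negP: p0; apply/eqP/mpolyP => mx; rewrite mcoeff0 memN_msupp_eq0 // H.
set C := (muni p)`_(mo ord_max).
have C0 : C != 0.
  by apply: contraNneq Hmo => HC; rewrite -muni_coef -/C HC mcoeff0.
have [v' Hv'] := IH C C0.
set Q := map_poly (meval v') (muni p).
have Q0 : Q != 0.
  apply: contraNneq Hv' => HQ.
  have := congr1 (fun z : {poly K} => z`_(mo ord_max)) HQ.
  by rewrite /= coef0 /Q coef_map_id0 ?meval0 // => ->.
have [t Ht] := poly_nonroot Q0.
by exists (vext v' t); rewrite meval_muni.
Qed.
End NonVanish.
Section Line.
Variable K : numFieldType.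

Lemma horner_mmap k (h : 'I_k -> {poly K}) (p : {mpoly K[k]}) (t : K) :
  (mmap polyC h p).[t] = meval (fun i => (h i).[t]) p.
Proof.
rewrite /meval /mmap horner_sum; apply: eq_bigr => mo _.
by rewrite hornerM hornerC /mmap1 horner_prod; congr (_ * _); apply: eq_bigr => i _; rewrite horner_exp.
Qed.

Lemma formmx_lin (N : nat) (br : 'rV[K]_N -> 'rV[K]_N -> 'rV[K]_N) a b t :
  formmx br (a + t *: b) = formmx br a + t *: formmx br b.
Proof.
apply/matrixP => i j; rewrite !mxE /pair mulr_sumr -big_split; apply: eq_bigr => k _.
by rewrite !mxE mulrDl mulrA.
Qed.

Lemma rank_ge_det (N r : nat) (F : 'M[K]_N) (B1 : 'M[K]_(r, N)) (B2 : 'M[K]_(N, r)) :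
  \det (B1 *m F *m B2) != 0 -> (r <= \rank F)%N.
Proof.
move=> Hd; set D := B1 *m F *m B2.
have HD : D \in unitmx by rewrite unitmxE unitfE.
apply: (@mulmx1_min_rank _ _ _ _ F (invmx D *m B1) B2).
have -> : invmx D *m B1 *m F *m B2 = invmx D *m D by rewrite /D !mulmxA.
exact: mulVmx.
Qed.

Lemma good_point (n m : nat) (br : 'rV[K]_(n + m) -> 'rV[K]_(n + m) -> 'rV[K]_(n + m))
  (p : {mpoly K[m]}) (p0 : p != 0) (g0 : 'rV[K]_(n + m))
  (Hmax : forall g, (\rank (formmx br g) <= \rank (formmx br g0))%N) :
  exists g, \rank (formmx br g) = \rank (formmx br g0) /\
            meval (fun i => rsubmx g 0 i) p != 0.
Proof.
have [v Hv] := mpoly_nonvanish p0.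
set x1 : 'rV[K]_m := \row_i v i.
set g1 : 'rV[K]_(n + m) := row_mx 0 x1.
set M0 := formmx br g0; set M1 := formmx br (g1 - g0).
have [B1 HB1] := row_fullP (col_base_full M0).
have [B2 HB2] := row_freeP (row_base_free M0).
have HB : B1 *m M0 *m B2 = 1%:M.
  have : B1 *m (col_base M0 *m row_base M0) *m B2 = 1%:M.
    by rewrite mulmxA mulmxA HB1 mul1mx HB2.
  by rewrite mulmx_base.
set Mp := map_mx polyC (B1 *m M0 *m B2) + 'X *: map_mx polyC (B1 *m M1 *m B2).
have HP2 t : (\det Mp).[t] = \det (B1 *m formmx br (g0 + t *: (g1 - g0)) *m B2).
  rewrite -horner_evalE -det_map_mx formmx_lin mulmxDr mulmxDl -scalemxAr -scalemxAl.
  congr (\det _); apply/matrixP => i j; rewrite !mxE /=.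
  by rewrite horner_evalE !hornerE.
set x0 := rsubmx g0.
set P1 := mmap polyC (fun i => (x0 0 i)%:P + 'X * (x1 0 i - x0 0 i)%:P) p.
have HP1 t : P1.[t] = meval (fun i => rsubmx (g0 + t *: (g1 - g0)) 0 i) p.
  rewrite horner_mmap; apply: meval_eq => i.
  have -> : rsubmx (g0 + t *: (g1 - g0)) = x0 + t *: (x1 - x0).
    by rewrite linearD linearZ linearB /= /g1 row_mxKr.
  by rewrite !mxE !hornerE mulrC.
have P10 : P1 != 0.
  apply: contraNneq Hv => H; have := HP1 1; rewrite H horner0 scale1r addrC subrK.
  by rewrite /g1 row_mxKr => ->; apply/eqP; apply: meval_eq => i; rewrite mxE.
have P20 : \det Mp != 0.
  apply/negP => /eqP H; have := HP2 0; rewrite H horner0 scale0r addr0 -/M0 HB det1.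
  by move/eqP; rewrite eq_sym oner_eq0.
have [t Ht] := poly_nonroot (mulf_neq0 P10 P20).
rewrite hornerM mulf_eq0 negb_or in Ht; case/andP: Ht => Ht1 Ht2.
exists (g0 + t *: (g1 - g0)); split; last by rewrite -HP1.
apply/eqP; rewrite eqn_leq Hmax /=.
by apply: (rank_ge_det (B1 := B1) (B2 := B2)); rewrite -HP2.
Qed.
End Line.
Section Deg.
Variable K : fieldType.

Lemma max_const (T : eqType) (s : seq T) (f : T -> nat) (c : nat) :
  s != [::] -> (forall x, x \in s -> f x = c) -> (\max_(x <- s) f x)%N = c.
Proof.
elim: s => // a s IH _ Hf; rewrite big_cons Hf ?mem_head //.
case: s IH Hf => [|b s] IH Hf; first by rewrite big_nil maxn0.
by rewrite IH // ?maxnn // => x Hx; apply: Hf; rewrite in_cons Hx orbT.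
Qed.

Lemma mdeg_split n m (mo : 'X_{1..n + m}) : mdeg mo = (gpart mo + vpart mo)%N.
Proof.
rewrite mdegE /gpart /vpart (bigID (fun i : 'I_(n + m) => (i < n)%N)) /=.
by congr (_ + _)%N; apply: eq_bigl => i; rewrite -leqNgt.
Qed.

Lemma totdeg_bihomog n m (H : {mpoly K[n + m]}) :
  bihomog H -> totdeg H = (degg H + degV H)%N.
Proof.
move=> Hb; rewrite /totdeg msizeE /degg /degV.
case Hs: (msupp H) => [|mo0 s]; first by rewrite !big_nil.
have Hin : mo0 \in msupp H by rewrite Hs mem_head.
rewrite -Hs.
have Hne : msupp H != [::] by rewrite Hs.
rewrite (@max_const _ _ _ (gpart mo0 + vpart mo0).+1) //; last first.
  by move=> x Hx; rewrite mdeg_split; have [-> ->] := Hb _ _ Hx Hin.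
rewrite (@max_const _ _ _ (gpart mo0)) //; last by move=> x Hx; have [-> _] := Hb _ _ Hx Hin.
by rewrite (@max_const _ _ _ (vpart mo0)) // => x Hx; have [_ ->] := Hb _ _ Hx Hin.
Qed.

Lemma degg0 n m (H : {mpoly K[n + m]}) :
  (forall mo, mo \in msupp H -> gpart mo = 0%N) -> degg H = 0%N.
Proof. by move=> Hg; rewrite /degg big1_seq // => mo /andP[_ Hmo]; apply: Hg. Qed.
End Deg.
Lemma ind_sub_spec (K : fieldType) (N : nat) (br : 'rV[K]_N -> 'rV[K]_N -> 'rV[K]_N)
  (U : 'M[K]_N) :
  (exists g, \rank (stab_sub br U g) = ind_sub br U) /\
  (forall g, (ind_sub br U <= \rank (stab_sub br U g))%N).
Proof.
rewrite /ind_sub; case: ex_minnP => k Hk Hmin; split.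
  by move: Hk; rewrite /pdec; case: excluded_middle_informative.
move=> g; apply: Hmin; rewrite /pdec; case: excluded_middle_informative => // H.
by exfalso; apply: H; exists g.
Qed.

From mathcomp Require Import zify.

Theorem lemma2p4 (R : realType) (n m : nat)
  (c : 'I_n -> 'I_n -> 'rV[complex R]_n) (A : 'I_n -> 'M[complex R]_m)
  (Hlie : is_lie (gbr c)) (Hrep : is_rep c A) (Hred : reductive c)
  (Hfaith : no_trivial_ideal c A)
  (r : nat) (H : nat -> {mpoly (complex R)[n + m]})
  (Hinv : forall i, (i < r)%N -> lie_invariant (qbr c A) (H i))
  (Hbih : forall i, (i < r)%N -> bihomog (H i))
  (Hgen : generic (fun x : 'rV[complex R]_m =>
      let l := ind_sub (gbr c) (gx A x) in
      [/\ (l <= r)%N,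
          freely_generate c A x [tuple phi x (H i) | i < l],
          (forall j, (l <= j < r)%N -> in_CVstar_inv c A (H j)) &
          (\sum_(i < l) degg (H i))%N = bb_sub (gbr c) (gx A x)])) :
  (\sum_(i < r) totdeg (H i))%N = bb (qbr c A) <->
  (\sum_(i < r) degV (H i))%N = m.
Proof.
case: Hgen => p [p0 Hp].
have [[g0 Hg0] Hmin] := ind_sub_spec (qbr c A) 1%:M.
have Hmax : forall g, (\rank (formmx (qbr c A) g) <= \rank (formmx (qbr c A) g0))%N.
  move=> g; have := Hmin g; rewrite -Hg0 !stab1_rank.
  have := rank_leq_row (formmx (qbr c A) g); have := rank_leq_row (formmx (qbr c A) g0).
  lia.
have [g [Hg Hpg]] := good_point p0 Hmax.
have Hgq : \rank (stab_sub (qbr c A) 1%:M g) = ind (qbr c A).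
  by rewrite /ind -Hg0 !stab1_rank Hg.
set x := rsubmx g; set xi := lsubmx g.
have Egx : g = row_mx xi x by rewrite hsubmxK.
have [Hlr _ HCV Hsum] := Hp x Hpg.
set l := ind_sub (gbr c) (gx A x) in Hlr HCV Hsum.
have [[xi' Hxi'] Hminl] := ind_sub_spec (gbr c) (gx A x).
have E1 := rank_stab_q c A xi x.
have E2 := rank_stab_q c A xi' x.
have L1 := Hminl xi.
have L2 := Hmin (row_mx xi' x).
rewrite -Egx Hgq in E1.
rewrite -/l in Hxi' L1.
have Hiq : (ind (qbr c A) + \rank (Bm A x) = l + m)%N.
  rewrite /ind in E1 L2 *; lia.
have HrB : (\rank (Bm A x) <= n)%N := rank_leq_row _.
have Hgxr : \rank (gx A x) = (n - \rank (Bm A x))%N by rewrite /gx mxrank_ker.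
have Hbbq : bb (qbr c A) = (m + bb_sub (gbr c) (gx A x))%N.
  rewrite /bb /bb_sub mxrank1 -/l Hgxr -/(ind (qbr c A)).
  have -> : (n + m + ind (qbr c A) = m * 2 + (n - \rank (Bm A x) + l))%N by lia.
  by rewrite divnMDl.
have Hsplit : (\sum_(i < r) totdeg (H i) =
     \sum_(i < r) degg (H i) + \sum_(i < r) degV (H i))%N.
  rewrite -big_split /=; apply: eq_bigr => i _; apply: totdeg_bihomog; exact: Hbih.
have Hdg : (\sum_(i < r) degg (H i) = \sum_(i < l) degg (H i))%N.
  rewrite -!(big_mkord xpredT (fun i => degg (H i))) (big_cat_nat (leq0n l) Hlr) /=.
  rewrite [X in (_ + X)%N]big_nat_cond [X in (_ + X)%N]big1 ?addn0 // => i /andP[Hi _].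
  by apply: degg0; have [] := HCV i Hi.
rewrite Hsplit Hdg Hsum Hbbq; lia.
Qed.
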